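(* Let $c<d$ be positive integers with $d\geq 4$, and let $X_{c,d}\subset\mathbb{P}^5$ be the threefold defined by $$x_0^c+x_1^c+x_2^c=x_3^c+x_4^c+x_5^c,\qquad x_0^d+x_1^d+x_2^d=x_3^d+x_4^d+x_5^d.$$ If $\Pi\subset X_{c,d}$ is a plane containing a rational point $[x_0,\dots,x_5]\in\mathbb{P}^5(\mathbb{Q})$ whose coordinates $x_0,\dots,x_5$ are all non-zero and of the same sign, then $\Pi$ is one of the six trivial planes $$x_0=x_i,\quad x_1=x_j,\quad x_2=x_k,$$ where $(i,j,k)$ is a permutation of $(3,4,5)$. *)

(* Defs.v *)
(* Complex numbers are modelled as R[i] (= complex R from
   mathcomp-real-closed) for an arbitrary R : realType (any realType is
   isomorphic to the real numbers, so R[i] is the field C). *)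
From HB Require Import structures.
From mathcomp Require Import all_boot all_order all_algebra all_fingroup.
From mathcomp Require Import reals.
From mathcomp Require Import complex.
Set Implicit Arguments. Unset Strict Implicit. Unset Printing Implicit Defensive.
Import Order.TTheory GRing.Theory Num.Theory.
Local Open Scope ring_scope.

(* A point of C^6 (an affine representative of a point of P^5) is a row
   vector v : 'rV[C]_6; its coordinates are v 0 i for i : 'I_6.
   Indices 0,1,2 are x_0,x_1,x_2 (lshift) and 3,4,5 are x_3,x_4,x_5 (rshift). *)
Definition lcoord (i : 'I_3) : 'I_6 := lshift 3 i.
Definition rcoord (i : 'I_3) : 'I_6 := rshift 3 i.

Definition fermat_eq {F : pzRingType} (e : nat) (v : 'rV[F]_6) : Prop :=
  \sum_(i < 3) v 0 (lcoord i) ^+ e = \sum_(i < 3) v 0 (rcoord i) ^+ e.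

Definition in_Xcd {F : pzRingType} (c d : nat) (v : 'rV[F]_6) : Prop :=
  fermat_eq c v /\ fermat_eq d v.

(* A plane of P^5 over F is a 3-dimensional linear subspace of F^6;
   it is contained in X_{c,d} iff all its vectors satisfy the equations. *)
Definition is_plane {F : fieldType} (P : {vspace 'rV[F]_6}) : Prop :=
  \dim P = 3%N.

Definition plane_in_Xcd {F : fieldType} (c d : nat) (P : {vspace 'rV[F]_6}) : Prop :=
  forall v, v \in P -> in_Xcd c d v.

(* The trivial plane  x_0 = x_{3+s 0}, x_1 = x_{3+s 1}, x_2 = x_{3+s 2}
   associated with a permutation s of {0,1,2} (i.e. (i,j,k) a permutation
   of (3,4,5)). *)
Definition in_trivial_plane {F : pzRingType} (s : 'S_3) (v : 'rV[F]_6) : Prop :=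
  forall i : 'I_3, v 0 (lcoord i) = v 0 (rcoord (s i)).

Definition ratvec {F : fieldType} (x : 'I_6 -> rat) : 'rV[F]_6 :=
  \row_(i < 6) ratr (x i).

Definition same_sign_nonzero (x : 'I_6 -> rat) : Prop :=
  (forall i, 0 < x i) \/ (forall i, x i < 0).

(* Main.v *)
Require Import Defs.
From HB Require Import structures.
From mathcomp Require Import all_boot all_order all_algebra all_fingroup.
From mathcomp Require Import reals.
From mathcomp Require Import complex.
From mathcomp Require Import ring.
Import Order.TTheory GRing.Theory Num.Theory.
Local Open Scope ring_scope.
Lemma poly_vanish (F : numFieldType) n (a : nat -> F) :
  (forall s : F, \sum_(k < n.+1) a k * s ^+ k = 0) -> forall k, (k <= n)%N -> a k = 0.
Proof.
move=> H k kn.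
pose q : {poly F} := \poly_(k < n.+1) a k.
have q0 : q = 0.
  apply/eqP; apply/negPn/negP => qn0.
  have := max_poly_roots qn0 (rs := [seq i%:R | i <- iota 0 n.+1]).
  rewrite size_map size_iota.
  have -> : all (root q) [seq i%:R | i <- iota 0 n.+1].
    apply/allP => y /mapP [i _ ->]; rewrite /root horner_poly; apply/eqP.
    by rewrite -[RHS](H i%:R); apply: eq_bigr => j _.
  rewrite map_inj_uniq ?iota_uniq //; last by move=> i j /eqP; rewrite eqr_nat => /eqP.
  by move=> /(_ isT isT); rewrite ltnNge size_poly.
by have := congr1 (fun p : {poly F} => p`_k) q0; rewrite coef_poly ltnS kn coef0.
Qed.

Definition eps {F : pzRingType} (j : 'I_6) : F := if (j < 3)%N then 1 else -1.

Definition prodl {F : pzRingType} (l : seq ('rV[F]_6 * nat)) (j : 'I_6) : F :=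
  \prod_(x <- l) (x.1 0 j) ^+ x.2.

Lemma sum6 {F : pzRingType} (f : 'I_6 -> F) :
  \sum_(j < 6) f j = \sum_(i < 3) f (lcoord i) + \sum_(i < 3) f (rcoord i).
Proof. exact: (@big_split_ord _ 0 +%R 3 3 xpredT f). Qed.

Lemma eps_l {F : pzRingType} i : @eps F (lcoord i) = 1.
Proof. by rewrite /eps /= ltn_ord. Qed.
Lemma eps_r {F : pzRingType} i : @eps F (rcoord i) = -1.
Proof. by rewrite /eps /=. Qed.

Lemma fermat_sum {F : pzRingType} {e : nat} {v : 'rV[F]_6} :
  fermat_eq e v -> \sum_j eps j * v 0 j ^+ e = 0.
Proof.
rewrite /fermat_eq sum6 => H.
under eq_bigr do rewrite eps_l mul1r.
under [X in _ + X]eq_bigr do rewrite eps_r mulN1r.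
by rewrite sumrN H subrr.
Qed.

Lemma polar (F : numFieldType) (P : {vspace 'rV[F]_6}) d :
  (forall v, v \in P -> fermat_eq d v) ->
  forall l : seq ('rV[F]_6 * nat), all (fun x => x.1 \in P) l ->
    sumn (map snd l) = d -> \sum_j eps j * prodl l j = 0.
Proof.
move=> H l; move: {2}(size l) (leqnn (size l)) => n; elim: n l => [|n IH] l.
  case: l => // _ _ /= d0.
  have := fermat_sum (H 0 (mem0v _)); rewrite -d0 => hh; rewrite -[RHS]hh.
  by apply: eq_bigr => j _; rewrite /prodl big_nil expr0.
case: l => [|[v1 e1] [|[v2 e2] rest]] /=.
- move=> _ _ d0; have := fermat_sum (H 0 (mem0v _)); rewrite -d0 => hh; rewrite -[RHS]hh.
  by apply: eq_bigr => j _; rewrite /prodl big_nil expr0.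
- move=> _ /andP [hv _]; rewrite addn0 => ed.
  have := fermat_sum (H _ hv); rewrite ed => hh; rewrite -[RHS]hh.
  by apply: eq_bigr => j _; rewrite /prodl big_cons big_nil mulr1.
rewrite !ltnS => sz /and3P [hv1 hv2 hr] sd.
pose E := (e1 + e2)%N.
pose a k := \sum_j eps j * (v1 0 j ^+ (E - k) * v2 0 j ^+ k *+ 'C(E, k)) * prodl rest j.
have ha : forall s, \sum_(k < E.+1) a k * s ^+ k = 0.
  move=> s.
  have := IH ((v1 + s *: v2, E) :: rest) sz; rewrite /= hr andbT.
  rewrite rpredD ?rpredZ // => /(_ isT); rewrite /E -addnA sd => /(_ erefl) hh; rewrite -[RHS]hh.
  rewrite /a; under eq_bigr do rewrite mulr_suml.
  rewrite exchange_big /=; apply: eq_bigr => j _.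
  rewrite /prodl big_cons /= !mxE exprDn mulr_suml mulr_sumr.
  apply: eq_bigr => k _; rewrite exprMn -!mulrnAl; ring.
have := @poly_vanish _ _ _ ha _ (leq_addl e1 e2).
rewrite /a /E addnK.
rewrite (eq_bigr (fun j => (eps j * (v1 0 j ^+ e1 * v2 0 j ^+ e2) * prodl rest j) *+ 'C(e1+e2,e2))); last by move=> j _; rewrite mulrnAr mulrnAl.
rewrite sumrMnl => /eqP; rewrite mulrn_eq0 eqn0Ngt bin_gt0 leq_addl /= => /eqP hh; rewrite -[RHS]hh.
apply: eq_bigr => j _; rewrite /prodl !big_cons /=; ring.
Qed.
Lemma rep (F : fieldType) (P : {vspace 'rV[F]_6}) : \dim P = 3%N ->
  exists B : 'M[F]_(3,6), (forall v, v \in P <-> exists c : 'rV_3, v = c *m B)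
    /\ (forall c : 'rV_3, c *m B = 0 -> c = 0).
Proof.
move=> hP; pose X := tcast hP (vbasis P).
have bX : basis_of P X by rewrite val_tcast vbasisP.
pose B : 'M[F]_(3,6) := \matrix_(k, j) (X`_k) 0 j.
have cB : forall c : 'rV_3, c *m B = \sum_k c 0 k *: X`_k.
  move=> c; apply/rowP => j; rewrite !mxE summxE; apply: eq_bigr => k _.
  by rewrite !mxE.
exists B; split.
  move=> v; split.
    move=> hv; exists (\row_i coord X i v); rewrite cB {1}(coord_basis bX hv).
    by apply: eq_bigr => i _; rewrite mxE.
  move=> [c ->]; rewrite cB; apply: rpred_sum => k _; apply: rpredZ.
  by apply: (basis_mem bX); apply: mem_nth; rewrite size_tuple.
move=> c; rewrite cB => h0; apply/rowP => k; rewrite mxE.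
by have := (elimT freeP) (basis_free bX) (fun k => c 0 k) h0 k.
Qed.

Definition o0 : 'I_3 := @Ordinal 3 0 isT.
Definition o1 : 'I_3 := @Ordinal 3 1 isT.
Definition o2 : 'I_3 := @Ordinal 3 2 isT.

Lemma sum3 {V : nmodType} (f : 'I_3 -> V) : \sum_k f k = f o0 + f o1 + f o2.
Proof.
rewrite !big_ord_recr big_ord0 /= add0r; congr (f _ + f _ + f _); exact: val_inj.
Qed.

Definition mk3 {F : pzRingType} (a b c : F) : 'rV[F]_3 := \row_k [:: a; b; c]`_k.

Lemma mk3E {F : pzRingType} (a b c : F) :
  (mk3 a b c 0 o0 = a) * (mk3 a b c 0 o1 = b) * (mk3 a b c 0 o2 = c).
Proof. by rewrite !mxE. Qed.

Definition dot3 {F : pzRingType} (a b : 'rV[F]_3) : F :=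
  a 0 o0 * b 0 o0 + a 0 o1 * b 0 o1 + a 0 o2 * b 0 o2.

Definition crossv {F : pzRingType} (a b : 'rV[F]_3) : 'rV[F]_3 :=
  mk3 (a 0 o1 * b 0 o2 - a 0 o2 * b 0 o1)
      (a 0 o2 * b 0 o0 - a 0 o0 * b 0 o2)
      (a 0 o0 * b 0 o1 - a 0 o1 * b 0 o0).

Definition colv {F : pzRingType} (B : 'M[F]_(3,6)) (j : 'I_6) : 'rV[F]_3 :=
  mk3 (B o0 j) (B o1 j) (B o2 j).

Lemma mulB {F : comPzRingType} (c : 'rV[F]_3) (B : 'M[F]_(3,6)) j :
  (c *m B) 0 j = dot3 c (colv B j).
Proof. by rewrite mxE sum3 /dot3 !mxE. Qed.

Lemma cross_dotl {F : comPzRingType} (a b : 'rV[F]_3) : dot3 (crossv a b) a = 0.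
Proof. rewrite /dot3 /crossv !mk3E; ring. Qed.
Lemma cross_dotr {F : comPzRingType} (a b : 'rV[F]_3) : dot3 (crossv a b) b = 0.
Proof. rewrite /dot3 /crossv !mk3E; ring. Qed.
Lemma cross_cyc {F : comPzRingType} (a b c : 'rV[F]_3) :
  dot3 (crossv a b) c = dot3 (crossv b c) a.
Proof. rewrite /dot3 /crossv !mk3E; ring. Qed.

Lemma ord3P (k : 'I_3) : [\/ k = o0, k = o1 | k = o2].
Proof.
case: k => [[|[|[|n]]] hk] //.
- by apply: Or31; apply: val_inj.
- by apply: Or32; apply: val_inj.
- by apply: Or33; apply: val_inj.
Qed.

Lemma bac {F : comPzRingType} (a y q : 'rV[F]_3) : crossv a y = 0 ->
  forall k, y 0 k * dot3 a q = a 0 k * dot3 y q.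
Proof.
move=> h.
have e0 : crossv a y 0 o0 = 0 by rewrite h mxE.
have e1 : crossv a y 0 o1 = 0 by rewrite h mxE.
have e2 : crossv a y 0 o2 = 0 by rewrite h mxE.
move: e0 e1 e2; rewrite /crossv !mk3E => e0 e1 e2.
move=> k; apply/eqP; rewrite -subr_eq0; apply/eqP.
case: (ord3P k) => ->.
- transitivity (q 0 o2 * (a 0 o2 * y 0 o0 - a 0 o0 * y 0 o2) - q 0 o1 * (a 0 o0 * y 0 o1 - a 0 o1 * y 0 o0)).
    by rewrite /dot3; ring.
  by rewrite e1 e2; ring.
- transitivity (q 0 o0 * (a 0 o0 * y 0 o1 - a 0 o1 * y 0 o0) - q 0 o2 * (a 0 o1 * y 0 o2 - a 0 o2 * y 0 o1)).
    by rewrite /dot3; ring.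
  by rewrite e0 e2; ring.
- transitivity (q 0 o1 * (a 0 o1 * y 0 o2 - a 0 o2 * y 0 o1) - q 0 o0 * (a 0 o2 * y 0 o0 - a 0 o0 * y 0 o2)).
    by rewrite /dot3; ring.
  by rewrite e0 e1; ring.
Qed.

Definition pj {F : pzRingType} (B : 'M[F]_(3,6)) (q : 'rV[F]_3) j := dot3 q (colv B j).

Definition cls {F : pzRingType} (B : 'M[F]_(3,6)) (q : 'rV[F]_3) (a b : 'I_6) : bool :=
  [forall k, pj B q a * B k b == pj B q b * B k a].

Lemma dot3C {F : comPzRingType} (a b : 'rV[F]_3) : dot3 a b = dot3 b a.
Proof. rewrite /dot3; ring. Qed.

Lemma colvE {F : pzRingType} (B : 'M[F]_(3,6)) j k : colv B j 0 k = B k j.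
Proof. by rewrite /colv mxE; case: (ord3P k) => ->. Qed.

Lemma cls_refl {F : pzRingType} B (q : 'rV[F]_3) a : cls B q a a.
Proof. by apply/forallP => k. Qed.

Lemma cls_sym {F : pzRingType} {B} {q : 'rV[F]_3} {a b} : cls B q a b -> cls B q b a.
Proof. by move/forallP => h; apply/forallP => k; rewrite eq_sym. Qed.

Lemma cls_trans {F : fieldType} {B} {q : 'rV[F]_3} {a b c} : pj B q b != 0 ->
  cls B q a b -> cls B q b c -> cls B q a c.
Proof.
move=> nzb /forallP h1 /forallP h2; apply/forallP => k.
move: (h1 k) (h2 k) => /eqP e1 /eqP e2.
rewrite -(inj_eq (mulfI nzb)); apply/eqP.
transitivity (pj B q a * (pj B q b * B k c)); first by ring.
rewrite e2; transitivity (pj B q c * (pj B q a * B k b)); first by ring.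
by rewrite e1; ring.
Qed.

Lemma cls_dot {F : comPzRingType} B (q : 'rV[F]_3) a b c : cls B q a b ->
  pj B q a * dot3 c (colv B b) = pj B q b * dot3 c (colv B a).
Proof.
move/forallP => h.
move: (h o0) (h o1) (h o2) => /eqP e0 /eqP e1 /eqP e2.
rewrite /dot3 !colvE.
transitivity (c 0 o0 * (pj B q a * B o0 b) + c 0 o1 * (pj B q a * B o1 b)
   + c 0 o2 * (pj B q a * B o2 b)); first by ring.
by rewrite e0 e1 e2; ring.
Qed.

Definition kill {F : pzRingType} (B : 'M[F]_(3,6)) (q : 'rV[F]_3) (i0 j : 'I_6) : 'rV[F]_3 :=
  match [pick k | pj B q i0 * B k j != pj B q j * B k i0] with
  | Some k => pj B q j *: delta_mx 0 k - B k j *: q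
  | None => q
  end.

Lemma dot_delta {F : comPzRingType} (B : 'M[F]_(3,6)) k m :
  dot3 (delta_mx 0 k) (colv B m) = B k m.
Proof.
rewrite /dot3 !colvE !mxE /=.
case: (ord3P k) => -> /=; rewrite /o0 /o1 /o2 /=; ring.
Qed.

Lemma dot3_lin {F : comPzRingType} (a b : F) (u v w : 'rV[F]_3) :
  dot3 (a *: u - b *: v) w = a * dot3 u w - b * dot3 v w.
Proof. rewrite /dot3 !mxE; ring. Qed.

Lemma kill_spec {F : comPzRingType} B (q : 'rV[F]_3) i0 j : ~~ cls B q i0 j ->
  dot3 (kill B q i0 j) (colv B j) = 0 /\ dot3 (kill B q i0 j) (colv B i0) != 0.
Proof.
rewrite /kill; case: pickP => [k hk | h].
  rewrite !dot3_lin !dot_delta -/(pj B q j) -/(pj B q i0); split; first by ring.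
  apply: contra hk => /eqP hh; rewrite -subr_eq0; apply/eqP; rewrite -oppr0 -hh; ring.
by move=> /forallPn [k]; rewrite h.
Qed.

Lemma killers (F : fieldType) (B : 'M[F]_(3,6)) (q : 'rV[F]_3)
  (free : forall c : 'rV[F]_3, c *m B = 0 -> c = 0) (pnz : forall j, pj B q j != 0) i0 :
  exists cs : seq 'rV[F]_3, (size cs <= 4)%N /\
    (forall c, c \in cs -> dot3 c (colv B i0) != 0) /\
    (forall j, ~~ cls B q i0 j -> exists2 c, c \in cs & dot3 c (colv B j) = 0).
Proof.
pose O := [set j | ~~ cls B q i0 j].
have O5 : (#|O| <= 5)%N.
  have : O \subset [set~ i0].
    by apply/subsetP => j; rewrite !inE; apply: contra => /eqP ->; apply: cls_refl.
  by move/subset_leq_card; rewrite cardsC1 card_ord.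
have [O0 | [a0 ha0]] := set_0Vmem O.
  exists [::]; split=> //; split=> // j hj.
  by have : j \in O; [rewrite inE | rewrite O0 inE].
have ha0x : ~~ cls B q i0 a0 by move: ha0; rewrite inE.
pose cc := crossv (colv B i0) (colv B a0).
have ccnz : cc != 0.
  apply/negP => /eqP h0.
  suff hc : cls B q i0 a0 by rewrite hc in ha0x.
  apply/forallP => k; apply/eqP.
  have := bac _ _ q h0 k; rewrite !colvE (dot3C (colv B i0)) (dot3C (colv B a0)) -/(pj B q i0) -/(pj B q a0).
  by move=> hh; rewrite mulrC hh mulrC.
have [b hb] : exists b, dot3 cc (colv B b) != 0.
  apply/existsP; apply: contraT => /existsPn h; case/negP: ccnz; apply/eqP; apply: free.
  by apply/rowP => j; rewrite mulB (eqP (negbNE (h j))) mxE.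
have hbO : ~~ cls B q i0 b.
  apply/negP => /(cls_dot _ _ _ _ cc) h; move: hb; apply/negP; rewrite negbK.
  by move: h; rewrite cross_dotl mulr0 => /eqP; rewrite mulf_eq0 (negPf (pnz i0)).
have ba0 : b != a0.
  by apply: contraNneq hb => ->; rewrite cross_dotr.
pose c0 := crossv (colv B a0) (colv B b).
exists (c0 :: [seq kill B q i0 j | j <- enum (O :\ a0 :\ b)]).
split.
  rewrite /= size_map -cardE ltnS.
  have := cardsD1 a0 O; rewrite ha0 /= => e1.
  have := cardsD1 b (O :\ a0); rewrite !inE ba0 hbO /= => e2.
  by move: O5; rewrite e1 e2 !add1n !ltnS.
split.
  move=> c; rewrite inE => /orP [/eqP ->|].
    by rewrite /c0 -cross_cyc.
  move=> /mapP [j]; rewrite mem_enum !inE => /and3P [_ _ hj] ->.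
  by case: (kill_spec _ _ _ _ hj).
move=> j hj.
case: (eqVneq j a0) => [->|ja].
  by exists c0; [rewrite inE eqxx | rewrite /c0 cross_dotl].
case: (eqVneq j b) => [->|jb].
  by exists c0; [rewrite inE eqxx | rewrite /c0 cross_dotr].
exists (kill B q i0 j); last by case: (kill_spec _ _ _ _ hj).
by rewrite inE; apply/orP; right; apply: map_f; rewrite mem_enum !inE ja jb hj.
Qed.

Lemma prod_scale {F : comPzRingType} (f g : 'rV[F]_3 -> F) r (cs : seq 'rV[F]_3) :
  (forall c, f c = r * g c) ->
  \prod_(c <- cs) f c = r ^+ size cs * \prod_(c <- cs) g c.
Proof.
move=> hf; elim: cs => [|c cs IH]; first by rewrite !big_nil expr0 mul1r.
by rewrite !big_cons IH hf /= exprS; ring.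
Qed.

Lemma prod_neq0 {F : fieldType} (g : 'rV[F]_3 -> F) (cs : seq 'rV[F]_3) :
  (forall c, c \in cs -> g c != 0) -> \prod_(c <- cs) g c != 0.
Proof.
elim: cs => [|c cs IH] h; first by rewrite big_nil oner_neq0.
rewrite big_cons mulf_neq0 //; first by apply: h; rewrite inE eqxx.
by apply: IH => c' hc'; apply: h; rewrite inE hc' orbT.
Qed.

Lemma Wlem (F : fieldType) (B : 'M[F]_(3,6)) (q : 'rV[F]_3)
  (free : forall c : 'rV[F]_3, c *m B = 0 -> c = 0) (pnz : forall j, pj B q j != 0)
  d (hd : (4 <= d)%N)
  (Hpol : forall cs : seq 'rV[F]_3, (size cs <= d)%N ->
     \sum_j eps j * (pj B q j ^+ (d - size cs) * \prod_(c <- cs) dot3 c (colv B j)) = 0)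
  i0 : \sum_(j | cls B q i0 j) eps j * pj B q j ^+ d = 0.
Proof.
have [cs [hs [hnz hk]]] := killers _ _ _ free pnz i0.
have hn : (size cs <= d)%N := leq_trans hs hd.
have := Hpol cs hn.
set n := size cs; set K := \prod_(c <- cs) dot3 c (colv B i0).
have Knz : K != 0 by apply: prod_neq0.
rewrite (bigID (cls B q i0)) /= [X in _ + X]big1 ?addr0; last first.
  move=> j hj; have [c hc h0] := hk j hj.
  by rewrite (big_rem c hc) /= h0 mul0r !mulr0.
have E : forall j, cls B q i0 j ->
    eps j * (pj B q j ^+ (d - n) * \prod_(c <- cs) dot3 c (colv B j))
    = eps j * pj B q j ^+ d * (K / pj B q i0 ^+ n).
  move=> j hj.
  rewrite (@prod_scale _ _ (fun c => dot3 c (colv B i0)) (pj B q j / pj B q i0)); last first.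
    move=> c; apply: (mulfI (pnz i0)); rewrite cls_dot //.
    by rewrite mulrA mulrCA mulfV ?mulr1 // (pnz i0).
  rewrite -/n -/K expr_div_n -[in RHS](subnK hn) exprD; ring.
under eq_bigr => j hj do rewrite E //.
rewrite -mulr_suml => /eqP; rewrite mulf_eq0 => /orP [/eqP //|].
by rewrite mulf_eq0 invr_eq0 expf_eq0 (negPf (pnz i0)) (negPf Knz) andbF.
Qed.

Lemma allzero {F : comPzRingType} {B : 'M[F]_(3,6)}
  (free : forall c : 'rV[F]_3, c *m B = 0 -> c = 0) {c} :
  (forall j, dot3 c (colv B j) = 0) -> c = 0.
Proof. by move=> h; apply: free; apply/rowP => j; rewrite mulB h mxE. Qed.

Lemma cls_zero {F : fieldType} {B : 'M[F]_(3,6)} {q} (pnz : forall j, pj B q j != 0) {u j c} :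
  cls B q j u -> dot3 c (colv B u) = 0 -> dot3 c (colv B j) = 0.
Proof.
move=> /(cls_dot _ _ _ _ c) h hu.
have : pj B q u * dot3 c (colv B j) = 0 by rewrite -h hu mulr0.
by move/eqP; rewrite mulf_eq0 (negPf (pnz u)) => /eqP.
Qed.

Lemma no2 (F : fieldType) (B : 'M[F]_(3,6)) (q : 'rV[F]_3)
  (free : forall c : 'rV[F]_3, c *m B = 0 -> c = 0) (pnz : forall j, pj B q j != 0) u w :
  ~ (forall j, cls B q j u || cls B q j w).
Proof.
move=> H.
have cc0 : crossv (colv B u) (colv B w) = 0.
  apply: (allzero free) => j; case/orP: (H j) => hj.
    by apply: (cls_zero pnz hj); rewrite cross_dotl.
  by apply: (cls_zero pnz hj); rewrite cross_dotr.
have huw : cls B q u w.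
  apply/forallP => k; apply/eqP; have := bac _ _ q cc0 k.
  rewrite !colvE (dot3C (colv B u)) (dot3C (colv B w)) -/(pj B q u) -/(pj B q w).
  by move=> hh; rewrite mulrC hh mulrC.
have Hu : forall j, cls B q j u.
  move=> j; case/orP: (H j) => // hj.
  exact: (cls_trans (pnz w) hj (cls_sym huw)).
have cy : forall y, crossv (colv B u) y = 0.
  move=> y; apply: (allzero free) => j.
  by apply: (cls_zero pnz (Hu j)); rewrite cross_dotl.
have b0 := bac _ _ q (cy (delta_mx 0 o0)).
have b1 := bac _ _ q (cy (delta_mx 0 o1)).
move: (b0 o0) (b0 o1) (b1 o1).
rewrite !colvE (dot3C (colv B u)) -/(pj B q u) /dot3 !mxE /=.
rewrite -/o0 -/o1 ?mul1r ?mul0r ?add0r ?addr0 ?mulr0 => e0 e1 e2.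
have h1 : B o1 u != 0.
  by apply: contra (pnz u) => /eqP h; rewrite e2 h mul0r.
move/eqP: e1; rewrite eq_sym mulf_eq0 (negPf h1) /= => /eqP hq.
by move/eqP: (pnz u); rewrite e0 hq mulr0.
Qed.

Lemma ord3_third (i i' : 'I_3) : i != i' ->
  exists k, forall t : 'I_3, [|| t == i, t == i' | t == k].
Proof.
case: (ord3P i) => ->; case: (ord3P i') => -> // _;
 [exists o2 | exists o1 | exists o2 | exists o0 | exists o1 | exists o0];
 by move=> t; case: (ord3P t) => ->.
Qed.

Lemma split6 (j : 'I_6) : (exists t, j = lcoord t) \/ (exists t, j = rcoord t).
Proof.
case: (splitP (j : 'I_(3 + 3))) => [t ht | t ht].
  by left; exists t; apply: val_inj; rewrite /= -ht.
by right; exists t; apply: val_inj; rewrite /= ht.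
Qed.

Lemma E1 (F : fieldType) (B : 'M[F]_(3,6)) (q : 'rV[F]_3)
  (y : 'I_6 -> rat) (hy : forall j, 0 < y j)
  (W : forall i0, \sum_(j | cls B q i0 j) eps j * y j = 0) i0 :
  exists2 j, cls B q i0 j & (j < 3)%N != (i0 < 3)%N.
Proof.
apply/exists_inP; apply: contraT => /exists_inPn h.
have : \sum_(j | cls B q i0 j) eps j * y j = eps i0 * \sum_(j | cls B q i0 j) y j.
  rewrite mulr_sumr; apply: eq_bigr => j hj.
  by move: (h j hj); rewrite negbK /eps => /eqP ->.
rewrite W => /esym /eqP; rewrite mulf_eq0 => /orP [|].
  by rewrite /eps; case: ifP => _; rewrite ?oppr_eq0 oner_eq0.
move=> /eqP hs; suff : 0 < \sum_(j | cls B q i0 j) y j by rewrite hs ltxx.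
rewrite (bigD1 i0) ?cls_refl //=; apply: lt_le_trans (hy i0) _.
by rewrite lerDl; apply: sumr_ge0 => j _; apply: ltW.
Qed.

Lemma E2gen (F : fieldType) (B : 'M[F]_(3,6)) (q : 'rV[F]_3)
  (free : forall c : 'rV[F]_3, c *m B = 0 -> c = 0) (pnz : forall j, pj B q j != 0)
  (f : 'I_3 -> 'I_6) (hf : forall j, exists t, cls B q j (f t)) i i' :
  i != i' -> ~~ cls B q (f i) (f i').
Proof.
move=> nii; apply/negP => hc.
have [k hk] := ord3_third _ _ nii.
apply: (no2 _ _ _ free pnz (f i) (f k)) => j.
have [t ht] := hf j.
case/or3P: (hk t) => /eqP et; rewrite et in ht.
- by rewrite ht.
- by rewrite (cls_trans (pnz (f i')) ht (cls_sym hc)).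
- by rewrite ht orbT.
Qed.

Lemma comb (F : fieldType) (B : 'M[F]_(3,6)) (q : 'rV[F]_3)
  (free : forall c : 'rV[F]_3, c *m B = 0 -> c = 0) (pnz : forall j, pj B q j != 0)
  (y : 'I_6 -> rat) (hy : forall j, 0 < y j)
  (W : forall i0, \sum_(j | cls B q i0 j) eps j * y j = 0) :
  exists s : 'I_3 -> 'I_3, injective s /\
    forall i, cls B q (lcoord i) (rcoord (s i)) /\ y (lcoord i) = y (rcoord (s i)).
Proof.
have hl : forall j, exists t, cls B q j (lcoord t).
  move=> j; case: (split6 j) => [[t ->]|[t ->]]; first by exists t; apply: cls_refl.
  have [m hm sm] := E1 _ _ _ _ hy W (rcoord t).
  case: (split6 m) => [[t' et]|[t' et]]; last by rewrite et in sm.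
  by exists t'; rewrite -et.
have hr : forall j, exists t, cls B q j (rcoord t).
  move=> j; case: (split6 j) => [[t ->]|[t ->]]; last by exists t; apply: cls_refl.
  have [m hm sm] := E1 _ _ _ _ hy W (lcoord t).
  case: (split6 m) => [[t' et]|[t' et]]; first by move: sm; rewrite et /lcoord /= !ltn_ord.
  by exists t'; rewrite -et.
have El := E2gen _ _ _ free pnz _ hl.
have Er := E2gen _ _ _ free pnz _ hr.
pose s i := odflt i [pick k | cls B q (lcoord i) (rcoord k)].
have hs : forall i, cls B q (lcoord i) (rcoord (s i)).
  move=> i; rewrite /s; case: pickP => [k //|h].
  by have [t ht] := hr (lcoord i); rewrite h in ht.
exists s; split.
  move=> i i' e; apply/eqP; apply: contraT => nii.
  move: (El _ _ nii); rewrite (cls_trans (pnz _) (hs i) (cls_sym _)) //.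
  by rewrite e; apply: hs.
move=> i; split => //.
have := W (lcoord i).
rewrite (bigD1 (lcoord i)) ?cls_refl //= (bigD1 (rcoord (s i))) /=; last first.
  by rewrite hs /=; apply/eqP => /(congr1 val) /= e; have := ltn_ord i; rewrite -e ltnNge leq_addr.
rewrite big1 ?addr0.
  by rewrite eps_l eps_r mul1r mulN1r => /eqP; rewrite subr_eq0 => /eqP.
move=> m /andP [/andP [hm nm1] nm2].
case: (split6 m) => [[t et]|[t et]]; rewrite et in hm nm1 nm2.
  case: (eqVneq i t) => [eit|nit]; first by rewrite eit eqxx in nm1.
  by move: (El _ _ nit); rewrite hm.
case: (eqVneq (s i) t) => [eit|nit]; first by rewrite eit eqxx in nm2.
move: (Er _ _ nit); rewrite (cls_trans (pnz _) (cls_sym (hs i)) hm) //.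
Qed.

Lemma sumn_map1 {A B : Type} (f : A -> B) (cs : seq A) :
  sumn [seq x.2 | x <- [seq (f c, 1%N) | c <- cs]] = size cs.
Proof. by elim: cs => //= c cs ->. Qed.

Lemma ratr_eps (F : numFieldType) j : ratr (eps j : rat) = (eps j : F).
Proof. by rewrite /eps; case: ifP => _; rewrite ?rmorph1 ?rmorphN1. Qed.

Lemma mulL {F : comPzRingType} (c : 'rV[F]_3) (B : 'M[F]_(3,6)) i :
  (c *m (\matrix_(k, i) B k (lcoord i))) 0 i = dot3 c (colv B (lcoord i)).
Proof. by rewrite mxE sum3 /dot3 !colvE !mxE. Qed.

Lemma main_pos (F : numFieldType) d (hd : (4 <= d)%N) (P : {vspace 'rV[F]_6})
  (hP : \dim P = 3%N) (hPX : forall v, v \in P -> fermat_eq d v)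
  (x : 'I_6 -> rat) (hx : forall i, 0 < x i) (hxP : ratvec x \in P) :
  exists s : 'S_3, forall v : 'rV[F]_6, v \in P <-> in_trivial_plane s v.
Proof.
have [B [memB free]] := rep _ _ hP.
have [q hq] := (memB _).1 hxP.
have pjE : forall j, pj B q j = ratr (x j) by move=> j; rewrite /pj -mulB -hq mxE.
have pnz : forall j, pj B q j != 0.
  by move=> j; rewrite pjE fmorph_eq0 gt_eqF.
have Hpol : forall cs : seq 'rV[F]_3, (size cs <= d)%N ->
     \sum_j eps j * (pj B q j ^+ (d - size cs) * \prod_(c <- cs) dot3 c (colv B j)) = 0.
  move=> cs hn.
  have := polar _ _ _ hPX ((ratvec x, d - size cs)%N :: [seq (c *m B, 1%N) | c <- cs]).
  rewrite /= hxP /= sumn_map1 subnK //.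
  have -> : all (fun x0 : 'rV_6 * nat => x0.1 \in P) [seq (c *m B, 1%N) | c <- cs].
    by apply/allP => z /mapP [c _ ->]; apply/memB; exists c.
  move=> /(_ isT erefl) hh; rewrite -[RHS]hh; apply: eq_bigr => j _.
  rewrite /prodl big_cons big_map /= pjE mxE; congr (_ * (_ * _)).
  by apply: eq_bigr => c _; rewrite expr1 mulB.
have W := Wlem _ _ _ free pnz _ hd Hpol.
have Wq : forall i0, \sum_(j | cls B q i0 j) eps j * x j ^+ d = 0.
  move=> i0; apply/eqP; rewrite -(fmorph_eq0 (@ratr F)) rmorph_sum; apply/eqP.
  rewrite -[RHS](W i0); apply: eq_bigr => j _.
  rewrite rmorphM rmorphXn pjE; congr (_ * _); rewrite /eps; case: ifP => _; by rewrite ?rmorph1 ?rmorphN1.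
have hy : forall j, 0 < x j ^+ d by move=> j; apply: exprn_gt0.
have [s [sinj hs]] := comb _ _ _ free pnz _ hy Wq.
have xeq : forall i, x (lcoord i) = x (rcoord (s i)).
  move=> i; case: (hs i) => _ h.
  have d0 : (0 < d)%N by apply: leq_trans hd.
  by apply: (pexpIrn d0) => //; rewrite qualifE /= ltW.
have col : forall i, colv B (lcoord i) = colv B (rcoord (s i)).
  move=> i; case: (hs i) => /forallP hc _.
  have e : forall k, B k (lcoord i) = B k (rcoord (s i)).
    move=> k; move: (hc k) => /eqP; rewrite !pjE xeq => /(mulfI _) -> //.
    by rewrite -pjE.
  by rewrite /colv !e.
exists (perm sinj) => v; rewrite /in_trivial_plane; split.
  by move=> /memB [c ->] i; rewrite permE !mulB col.
move=> hv.
pose L : 'M[F]_3 := \matrix_(k, i) B k (lcoord i).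
have colr : forall t, colv B (rcoord t) = colv B (lcoord ((perm sinj)^-1 t)%g).
  by move=> t; rewrite col -[in LHS](permKV (perm sinj) t) permE.
have Lu : L \in unitmx.
  apply: contraT; rewrite -row_free_unit -kermx_eq0 => nz.
  have [k hk] : exists k, row k (kermx L) != 0.
    apply/existsP; apply: contraT => /existsPn h; case/negP: nz.
    by apply/eqP/row_matrixP => k; rewrite row0; apply/eqP/negbNE/h.
  have cL : row k (kermx L) *m L = 0 by rewrite -row_mul mulmx_ker row0.
  have hl : forall i, dot3 (row k (kermx L)) (colv B (lcoord i)) = 0.
    by move=> i; rewrite -mulL -/L cL mxE.
  case/negP: hk; apply/eqP; apply: (allzero free) => j.
  by case: (split6 j) => [[t ->]|[t ->]]; rewrite ?colr hl.
pose u : 'rV[F]_3 := \row_i v 0 (lcoord i).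
apply/memB; exists (u *m invmx L); apply/rowP => j; rewrite mulB.
have hl : forall i, dot3 (u *m invmx L) (colv B (lcoord i)) = v 0 (lcoord i).
  by move=> i; rewrite -mulL -/L mulmxKV // mxE.
case: (split6 j) => [[t ->]|[t ->]]; first by rewrite hl.
by rewrite colr hl hv permKV.
Qed.

Theorem mainTheorem5 (R : realType) (c d : nat)
    (hc : (0 < c)%N) (hcd : (c < d)%N) (hd : (4 <= d)%N)
    (P : {vspace 'rV[R[i]]_6})
    (hP : is_plane P) (hPX : plane_in_Xcd c d P)
    (x : 'I_6 -> rat) (hx : same_sign_nonzero x) (hxP : ratvec x \in P) :
  exists s : 'S_3, forall v : 'rV[R[i]]_6, v \in P <-> in_trivial_plane s v.
Proof.
have hPX' : forall v, v \in P -> fermat_eq d v by move=> v hv; case: (hPX v hv).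
case: hx => hx.
  exact: (main_pos _ _ hd _ hP hPX' _ hx hxP).
apply: (main_pos _ _ hd _ hP hPX' (fun i => - x i)).
  by move=> i; rewrite oppr_gt0.
have -> : ratvec (fun i => - x i) = - ratvec x :> 'rV[R[i]]_6.
  by apply/rowP => j; rewrite !mxE rmorphN.
by rewrite rpredN.
Qed.
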